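(* Let $x,y$ be real (or complex) numbers with $x\neq 0$, $y\neq 0$ and $x+y\neq 0$. Then for every nonnegative integer $n$, $$\sum_{k=0}^{n}\binom{n}{k}^{-1}x^ky^{n-k}=x^n+\left(\frac{xy}{x+y}\right)^n(n+1)\sum_{j=0}^{n-1}\frac{\big((j+1)y^{j+2}+y\,x^{j+1}\big)(x+y)^j}{(xy)^{j+1}(j+1)(j+2)}.$$ *)

(* Defs.v *)
From mathcomp Require Import all_boot all_order all_algebra.

(* Main.v *)
Require Import Defs.
From mathcomp Require Import all_boot all_order all_algebra.
From mathcomp Require Import ring.
Import GRing.Theory Num.Theory.
Local Open Scope ring_scope.

Lemma binrec (R : numFieldType) (n k : nat) : (k <= n)%N ->
  ('C(n.+1, k))%:R^-1 + ('C(n.+1, k.+1))%:R^-1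
  = (n.+2)%:R / (n.+1)%:R * ('C(n, k))%:R^-1 :> R.
Proof.
move=> kn.
set m := (n.+1 - k)%N.
have h1 : ('C(n.+1, k))%:R * m%:R = (n.+1)%:R * ('C(n, k))%:R :> R.
  by rewrite -!natrM mulnC /m -(mul_bin_down n.+1 k).
have h2 : ('C(n.+1, k.+1))%:R * (k.+1)%:R = (n.+1)%:R * ('C(n, k))%:R :> R.
  by rewrite -!natrM mulnC (mul_bin_diag n.+1 k).
have h3 : (n.+2)%:R = m%:R + (k.+1)%:R :> R.
  by rewrite -natrD /m; congr (_%:R); rewrite subSn // addSn addnS subnK.
have Bn : ('C(n, k))%:R != 0 :> R by rewrite pnatr_eq0 -lt0n bin_gt0.
have mn : m%:R != 0 :> R by rewrite pnatr_eq0 /m subn_eq0 -ltnNge ltnS.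
have kn1 : (k.+1)%:R != 0 :> R by rewrite pnatr_eq0.
have nn1 : (n.+1)%:R != 0 :> R by rewrite pnatr_eq0.
have -> : ('C(n.+1, k))%:R = (n.+1)%:R * ('C(n, k))%:R / m%:R :> R.
  by rewrite -h1 mulfK.
have -> : ('C(n.+1, k.+1))%:R = (n.+1)%:R * ('C(n, k))%:R / (k.+1)%:R :> R.
  by rewrite -h2 mulfK.
rewrite h3; field.
have -> : 1 + k%:R != 0 :> R by rewrite addrC natr1.
have -> : 1 + n%:R != 0 :> R by rewrite addrC natr1.
by rewrite Bn mn.
Qed.

Definition S (R : numFieldType) (x y : R) n :=
  \sum_(0 <= k < n.+1) ('C(n, k))%:R^-1 * x ^+ k * y ^+ (n - k).

Lemma Srec (R : numFieldType) (x y : R) n :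
  (x + y) * S _ x y n.+1 = x ^+ n.+2 + y ^+ n.+2
    + x * y * ((n.+2)%:R / (n.+1)%:R) * S _ x y n.
Proof.
have E : x * y * ((n.+2)%:R / (n.+1)%:R) * S _ x y n =
  x * \sum_(0 <= k < n.+1) ('C(n.+1, k))%:R^-1 * x ^+ k * y ^+ (n.+1 - k)
  + y * \sum_(0 <= k < n.+1) ('C(n.+1, k.+1))%:R^-1 * x ^+ k.+1 * y ^+ (n.+1 - k.+1).
  rewrite /S !mulr_sumr -big_split /=; apply: eq_big_nat => k /andP[_ kn].
  rewrite ltnS in kn.
  rewrite subSS subSn // !exprS.
  have B := @binrec R n k kn.
  set a := ('C(n.+1, k))%:R^-1 in B *.
  set b := ('C(n.+1, k.+1))%:R^-1 in B *.
  set c := ('C(n, k))%:R^-1 in B *.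
  have -> : x * y * (n.+2%:R / n.+1%:R) * (c * x ^+ k * y ^+ (n - k))
    = x * y * (n.+2%:R / n.+1%:R * c) * x ^+ k * y ^+ (n - k) by ring.
  rewrite -B; ring.
have H1 : S R x y n.+1 = \sum_(0 <= k < n.+1) ('C(n.+1, k))%:R^-1 * x ^+ k * y ^+ (n.+1 - k) + x ^+ n.+1.
  by rewrite /S (big_nat_recr n.+1) //= subnn binn invr1 expr0 mulr1 mul1r.
have H2 : S R x y n.+1 = y ^+ n.+1 + \sum_(0 <= k < n.+1) ('C(n.+1, k.+1))%:R^-1 * x ^+ k.+1 * y ^+ (n.+1 - k.+1).
  by rewrite /S (big_nat_recl n.+1) //= subn0 bin0 invr1 expr0 !mul1r.
rewrite E mulrDl {1}H1 H2 !exprS; ring.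
Qed.

Theorem mainTheorem5 (R : numFieldType) (x y : R)
  (hx : x != 0) (hy : y != 0) (hxy : x + y != 0) (n : nat) :
  \sum_(0 <= k < n.+1) ('C(n, k))%:R^-1 * x ^+ k * y ^+ (n - k)
  = x ^+ n + (x * y / (x + y)) ^+ n * n.+1%:R *
    \sum_(0 <= j < n)
      (((j.+1)%:R * y ^+ j.+2 + y * x ^+ j.+1) * (x + y) ^+ j)
      / ((x * y) ^+ j.+1 * (j.+1)%:R * (j.+2)%:R).
Proof.
rewrite -[LHS]/(S R x y n).
elim: n => [|n IH].
  by rewrite /S big_nat1 big_geq // bin0 invr1 !mulr0 !mul1r addr0 expr0.
set F := \sum_(0 <= j < n) _ in IH.
rewrite (big_nat_recr n) //= -/F.
apply: (mulfI hxy); rewrite Srec IH.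
have nn1 : (n.+1)%:R != 0 :> R by rewrite pnatr_eq0.
have nn2 : (n.+2)%:R != 0 :> R by rewrite pnatr_eq0.
rewrite !expr_div_n !exprMn !exprS.
field.
have -> : 1 + n%:R != 0 :> R by rewrite addrC natr1.
have -> : 2 + n%:R != 0 :> R by rewrite addrC -natrD addn2.
by rewrite hx hy hxy !expf_neq0.
Qed.
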